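(* Let $C\subseteq\mathbb{S}$ be a nonempty closed s-convex set. Then $\operatorname{sext}C\neq\emptyset$, $\operatorname{sext}C$ is hull-addible, and $C=\operatorname{sco}(\operatorname{sext}C)$.
   Context: Standing setting: $n\ge 2$; $o$ denotes the zero vector of $\mathbb{R}^n$. $\Phi:\mathbb{R}^n\to\mathbb{R}_+:=[0,\infty)$ is a continuous function with $\Phi(tx)=t\Phi(x)$ for all $x\in\mathbb{R}^n$, $t\ge 0$, and $\Phi(x)=0$ iff $x=o$. Set $\mathbb{S}:=\{x\in\mathbb{R}^n\mid \Phi(x)=1\}$ (with the topology induced from $\mathbb{R}^n$) and $\rho:\mathbb{R}^n\to\{o\}\cup\mathbb{S}$, $\rho(x):=x/\Phi(x)$ for $x\neq o$, $\rho(o):=o$. For $x,y\in\mathbb{S}$, $\lambda\in[0,1]$, $\lambda x+_s(1-\lambda)y:=\rho(\lambda x+(1-\lambda)y)$. A nonempty set $S\subseteq\mathbb{S}$ is called s-convex if $\lambda x+_s(1-\lambda)y\in S$ for all $x,y\in S$ and $\lambda\in[0,1]$. For s-convex $C$, a point $x\in C$ is an s-extreme point of $C$ if whenever $x_1,x_2\in C$, $\lambda\in(0,1)$ and $x=\lambda x_1+_s(1-\lambda)x_2$, then $x_1=x_2$; $\operatorname{sext}C$ denotes the set of s-extreme points of $C$. A nonempty set $S\subseteq\mathbb{S}$ is hull-addible if $o\notin\operatorname{conv}S$; for such $S$, $\operatorname{sco}S:=\rho(\operatorname{conv}S)$. *)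

(* Defs.v *)
From HB Require Import structures.
From mathcomp Require Import all_boot all_order all_algebra.
From mathcomp Require Import all_classical all_reals all_analysis.
Set Implicit Arguments. Unset Strict Implicit. Unset Printing Implicit Defensive.
Import Order.TTheory GRing.Theory Num.Theory numFieldNormedType.Exports.
Local Open Scope classical_set_scope.
Local Open Scope ring_scope.

Section SConvex.
Variables (R : realType) (n : nat) (Phi : 'rV[R]_n -> R).

Definition sph : set 'rV[R]_n := [set x | Phi x = 1].

Definition rho (x : 'rV[R]_n) : 'rV[R]_n :=
  if x == 0 then 0 else (Phi x)^-1 *: x.

Definition sadd (l : R) (x y : 'rV[R]_n) : 'rV[R]_n :=
  rho (l *: x + (1 - l) *: y).

Definition s_convex (S : set 'rV[R]_n) : Prop :=
  S !=set0 /\ S `<=` sph /\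
  forall x y l, S x -> S y -> 0 <= l <= 1 -> S (sadd l x y).

Definition s_extreme (C : set 'rV[R]_n) (x : 'rV[R]_n) : Prop :=
  C x /\ forall x1 x2 l, C x1 -> C x2 -> 0 < l < 1 -> x = sadd l x1 x2 -> x1 = x2.

Definition sext (C : set 'rV[R]_n) : set 'rV[R]_n := [set x | s_extreme C x].

Definition conv (S : set 'rV[R]_n) : set 'rV[R]_n :=
  [set x | exists (k : nat) (w : 'I_k -> R) (p : 'I_k -> 'rV[R]_n),
     (forall i, 0 <= w i) /\ \sum_(i < k) w i = 1 /\ (forall i, S (p i)) /\
     x = \sum_(i < k) w i *: p i].

Definition hull_addible (S : set 'rV[R]_n) : Prop :=
  S !=set0 /\ S `<=` sph /\ ~ conv S 0.

Definition sco (S : set 'rV[R]_n) : set 'rV[R]_n := rho @` conv S.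

End SConvex.

(* Main.v *)
Require Import Defs.
From HB Require Import structures.
From mathcomp Require Import all_boot all_order all_algebra.
From mathcomp Require Import all_classical all_reals all_analysis.
From mathcomp Require Import ring lra.
Import Order.TTheory GRing.Theory Num.Theory numFieldNormedType.Exports.
Local Open Scope classical_set_scope.
Local Open Scope ring_scope.
Set Implicit Arguments. Unset Strict Implicit. Unset Printing Implicit Defensive.

Section S.
Variables (R : realType) (n : nat) (Phi : 'rV[R]_n -> R).
Hypothesis Phi_cont : continuous Phi.
Hypothesis Phi_ge0 : forall x, 0 <= Phi x.
Hypothesis Phi_hom : forall (t : R) x, 0 <= t -> Phi (t *: x) = t * Phi x.
Hypothesis Phi_eq0 : forall x, Phi x = 0 <-> x = 0.
Variable C : set 'rV[R]_n.
Hypothesis C_sconv : s_convex Phi C.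
Hypothesis C_closed : closed C.

Local Notation V := 'rV[R]_n.

Lemma PhiC x : C x -> Phi x = 1.
Proof. by case: C_sconv => _ [+ _] => /[apply]. Qed.

Lemma C_neq0 x : C x -> x != 0.
Proof. by move=> /PhiC h; apply/eqP => x0; move: h; rewrite x0 (proj2 (Phi_eq0 0) erefl) => /eqP; rewrite eq_sym oner_eq0. Qed.

Lemma Phi_gt0 x : x != 0 -> 0 < Phi x.
Proof. by move=> x0; rewrite lt_def Phi_ge0 andbT; apply/eqP => /Phi_eq0 /eqP; rewrite (negbTE x0). Qed.

Lemma rhoE x : x != 0 -> rho Phi x = (Phi x)^-1 *: x.
Proof. by move=> x0; rewrite /rho (negbTE x0). Qed.

Lemma rho_scale x : x != 0 -> x = Phi x *: rho Phi x.
Proof. by move=> x0; rewrite rhoE // scalerA divff ?scale1r // gt_eqF ?Phi_gt0. Qed.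

Lemma rhoZ k x : 0 < k -> x != 0 -> rho Phi (k *: x) = rho Phi x.
Proof.
move=> k0 x0; have kx0 : k *: x != 0 by rewrite scaler_eq0 negb_or gt_eqF.
rewrite !rhoE // Phi_hom ?ltW // scalerA invfM; congr (_ *: _); field; by rewrite !gt_eqF ?Phi_gt0.
Qed.

Lemma rho_C x : C x -> rho Phi x = x.
Proof. by move=> Cx; rewrite rhoE ?C_neq0 // PhiC // invr1 scale1r. Qed.

Lemma comb_eq (t s : R) (x y : V) : 0 < t + s ->
  (t/(t+s)) *: x + (1 - t/(t+s)) *: y = (t+s)^-1 *: (t *: x + s *: y).
Proof.
move=> ts; rewrite scalerDr !scalerA; congr (_ *: _ + _ *: _); first by rewrite mulrC.
by field; rewrite gt_eqF.
Qed.

Lemma C_sadd x y l : C x -> C y -> 0 <= l <= 1 -> C (sadd Phi l x y).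
Proof. by case: C_sconv => _ [_ h] /h h1 /h1; apply. Qed.

Lemma comb_nz t s x y : C x -> C y -> 0 <= t -> 0 <= s -> 0 < t + s ->
  t *: x + s *: y != 0.
Proof.
move=> Cx Cy t0 s0 ts; apply/negP => /eqP h.
have l01 : 0 <= t/(t+s) <= 1.
  by apply/andP; split; [rewrite divr_ge0 // ltW | rewrite ler_pdivrMr // mul1r lerDl].
have := C_sadd Cx Cy l01; rewrite /sadd comb_eq // h scaler0 /rho eqxx.
by move/C_neq0; rewrite eqxx.
Qed.

Definition K (v : V) := exists t c, 0 <= t /\ C c /\ v = t *: c.

Lemma C_K c : C c -> K c.
Proof. by move=> Cc; exists 1, c; rewrite ler01 scale1r. Qed.

Lemma K0 : K 0.
Proof. by case: C_sconv => -[c Cc] _; exists 0, c; rewrite lexx scale0r. Qed.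

Lemma K_scale k u : 0 <= k -> K u -> K (k *: u).
Proof.
move=> k0 [t [c [t0 [Cc ->]]]]; exists (k * t), c.
by rewrite mulr_ge0 // scalerA.
Qed.

Lemma K_of_rho v : v != 0 -> C (rho Phi v) -> K v.
Proof.
by move=> v0 Cv; exists (Phi v), (rho Phi v); rewrite Phi_ge0 -rho_scale.
Qed.

Lemma K_rho v : v != 0 -> K v -> C (rho Phi v).
Proof.
move=> v0 [t [c [t0 [Cc ve]]]]; move: v0; rewrite ve scaler_eq0 negb_or => /andP [tn0 _].
by rewrite rhoZ ?rho_C // ?C_neq0 // lt_def tn0.
Qed.

Lemma K_add u w : K u -> K w -> K (u + w).
Proof.
move=> [t [x [t0 [Cx ->]]]] [s [y [s0 [Cy ->]]]].
have [ts0|ts] := eqVneq (t + s) 0.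
  move/eqP: ts0; rewrite paddr_eq0 // => /andP [/eqP -> /eqP ->].
  by rewrite !scale0r addr0; exact: K0.
have tsp : 0 < t + s by rewrite lt_def ts addr_ge0.
apply: K_of_rho; first exact: comb_nz.
have -> : t *: x + s *: y = (t + s) *: ((t/(t+s)) *: x + (1 - t/(t+s)) *: y).
  by rewrite comb_eq // scalerA divff ?scale1r // gt_eqF.
rewrite rhoZ //; last by rewrite comb_eq // scaler_eq0 negb_or invr_eq0 ts comb_nz.
apply: C_sadd => //.
by apply/andP; split; [rewrite divr_ge0 // ltW | rewrite ler_pdivrMr // mul1r lerDl].
Qed.

Lemma K_pointed u w : K u -> K w -> u + w = 0 -> u = 0.
Proof.
move=> [t [x [t0 [Cx ue]]]] [s [y [s0 [Cy we]]]] h.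
have [ts0|ts] := eqVneq (t + s) 0.
  move/eqP: ts0; rewrite paddr_eq0 // => /andP [/eqP t00 _].
  by rewrite ue t00 scale0r.
have tsp : 0 < t + s by rewrite lt_def ts addr_ge0.
by move: (comb_nz Cx Cy t0 s0 tsp); rewrite -ue -we h eqxx.
Qed.

Lemma K_conv a b l : K a -> K b -> 0 <= l <= 1 -> K (l *: a + (1 - l) *: b).
Proof. by move=> Ka Kb /andP [l0 l1]; apply: K_add; apply: K_scale; rewrite ?subr_ge0. Qed.

Definition L (v : V) : set V :=
  fun d => exists2 e, 0 < e & K (v + e *: d) /\ K (v - e *: d).

Lemma L_K v d : L v d -> K v.
Proof.
move=> [e e0 [K1 K2]].
have := K_conv K1 K2 (_ : 0 <= 1/2 <= 1).
have -> : 1/2 *: (v + e *: d) + (1 - 1/2) *: (v - e *: d) = v.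
  by apply/rowP => i; rewrite !mxE; field.
by apply; apply/andP; split; [rewrite divr_ge0 | rewrite ler_pdivrMr // mul1r ler1n].
Qed.

Lemma L_shrink v d e : L v d -> 0 < e -> exists2 e', 0 < e' /\ e' <= e &
  K (v + e' *: d) /\ K (v - e' *: d).
Proof.
move=> Lvd e0; have Kv := L_K Lvd; case: Lvd => [f f0 [K1 K2]].
exists (Num.min e f); first by rewrite lt_min e0 f0 ge_min lexx.
have m0 : 0 < Num.min e f by rewrite lt_min e0 f0.
have l01 : 0 <= Num.min e f / f <= 1.
  by apply/andP; split; [rewrite divr_ge0 // ltW | rewrite ler_pdivrMr // mul1r ge_min lexx orbT].
split.
  have := K_conv K1 Kv l01.
  have -> // : Num.min e f / f *: (v + f *: d) + (1 - Num.min e f / f) *: v = v + Num.min e f *: d.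
  by apply/rowP => i; rewrite !mxE; field; rewrite gt_eqF.
have := K_conv K2 Kv l01.
have -> // : Num.min e f / f *: (v - f *: d) + (1 - Num.min e f / f) *: v = v - Num.min e f *: d.
by apply/rowP => i; rewrite !mxE; field; rewrite gt_eqF.
Qed.

Lemma L0 v : K v -> L v 0.
Proof. by move=> Kv; exists 1 => //; rewrite scaler0 addr0 subr0. Qed.

Lemma L_scale v d k : L v d -> L v (k *: d).
Proof.
move=> Lvd; have Kv := L_K Lvd; case: Lvd => [e e0 [K1 K2]].
have [k0|kn0] := eqVneq k 0; first by rewrite k0 scale0r; exact: L0.
have [kp|kn] := ltP 0 k.
  exists (e / k); first by rewrite divr_gt0.
  rewrite !scalerA divfK //; by split.
exists (e / - k); first by rewrite divr_gt0 // oppr_gt0 lt_neqAle kn0 kn.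
rewrite !scalerA; have -> : e / - k * k = - e by field.
by rewrite !scaleNr opprK; split.
Qed.

Lemma L_add v d1 d2 : L v d1 -> L v d2 -> L v (d1 + d2).
Proof.
move=> L1 L2; case: (L1) => [e1 e10 _].
have [e [e0 _] [K1 K2]] := L_shrink L1 e10.
case: (L2) => [e2 e20 [K3 K4]].
have [f [f0 fe] [K5 K6]] := L_shrink L2 e0.
have l01 : 0 <= f / e <= 1.
  by apply/andP; split; [rewrite divr_ge0 // ltW | rewrite ler_pdivrMr // mul1r].
have [K7 K8] : K (v + f *: d1) /\ K (v - f *: d1).
  split.
    have := K_conv K1 (L_K L1) l01.
    have -> // : f / e *: (v + e *: d1) + (1 - f / e) *: v = v + f *: d1.
    by apply/rowP => i; rewrite !mxE; field; rewrite gt_eqF.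
  have := K_conv K2 (L_K L1) l01.
  have -> // : f / e *: (v - e *: d1) + (1 - f / e) *: v = v - f *: d1.
  by apply/rowP => i; rewrite !mxE; field; rewrite gt_eqF.
have h01 : 0 <= (1/2 : R) <= 1 by apply/andP; split; [rewrite divr_ge0 | rewrite ler_pdivrMr // mul1r ler1n].
exists (f / 2); first by rewrite divr_gt0.
split.
  have := K_conv K7 K5 h01.
  have -> // : 1/2 *: (v + f *: d1) + (1 - 1/2) *: (v + f *: d2) = v + f / 2 *: (d1 + d2).
  by apply/rowP => i; rewrite !mxE; field.
have := K_conv K8 K6 h01.
have -> // : 1/2 *: (v - f *: d1) + (1 - 1/2) *: (v - f *: d2) = v - f / 2 *: (d1 + d2).
by apply/rowP => i; rewrite !mxE; field.
Qed.

Lemma L_span v (s : seq V) : K v -> (forall x, x \in s -> L v x) ->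
  forall w, w \in span s -> L v w.
Proof.
move=> Kv; elim: s => [|x s IH] hs w.
  by rewrite span_nil memv0 => /eqP ->; exact: L0.
rewrite span_cons => /memv_addP [u /vlineP [k ->] [z zs ->]].
apply: L_add; first by apply: L_scale; apply: hs; rewrite inE eqxx.
by apply: IH zs => y ys; apply: hs; rewrite inE ys orbT.
Qed.

Lemma L_self v : K v -> L v v.
Proof.
move=> Kv; exists (1/2); first by rewrite divr_gt0.
split.
  have -> : v + 1/2 *: v = (3/2) *: v by apply/rowP => i; rewrite !mxE; field.
  by apply: K_scale => //; rewrite divr_ge0.
have -> : v - 1/2 *: v = (1/2) *: v by apply/rowP => i; rewrite !mxE; field.
by apply: K_scale => //; rewrite divr_ge0.
Qed.

Lemma L_mono a k mu : K k -> 0 < mu -> forall d, L a d -> L (mu *: a + k) d.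
Proof.
move=> Kk mu0 d [e e0 [K1 K2]]; exists (mu * e); first by rewrite mulr_gt0.
split.
  have -> : mu *: a + k + (mu * e) *: d = mu *: (a + e *: d) + k.
    by apply/rowP => i; rewrite !mxE; ring.
  by apply: K_add => //; apply: K_scale => //; rewrite ltW.
have -> : mu *: a + k - (mu * e) *: d = mu *: (a - e *: d) + k.
  by apply/rowP => i; rewrite !mxE; ring.
by apply: K_add => //; apply: K_scale => //; rewrite ltW.
Qed.

Lemma free_size (s : seq V) : free s -> (size s <= n)%N.
Proof.
move=> /eqP <-; apply: leq_trans (dimvS (subvf _)) _.
by rewrite dimvf /dim /= mul1n.
Qed.

Lemma Kline_lim (p q : V) (a b : R) : a < b -> (forall s : R, p + s *: q != 0) ->
  (forall s, a < s < b -> K (p + s *: q)) -> K (p + b *: q).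
Proof.
move=> ab nz hs; apply: K_of_rho => //.
pose f := fun s : R => (Phi (p + s *: q))^-1 *: (p + s *: q).
have fE s : rho Phi (p + s *: q) = f s by rewrite rhoE.
rewrite fE; apply: (@closed_cvg R V b^'- _ f C C_closed).
  near=> s; rewrite -fE; apply: K_rho => //; apply: hs; apply/andP; split.
    by near: s; exact: nbhs_left_gt.
  by near: s; exact: nbhs_left_lt.
apply: cvg_at_left_filter.
have hc : {for b, continuous (fun s : R => p + s *: q)}.
  have h1 : {for b, continuous (fun s : R => s *: q)}.
    by apply: continuousZr_tmp; exact: cvg_id.
  have h0 : {for b, continuous (fun _ : R => p)} by exact: cst_continuous.
  exact: (@continuousD R V R (fun _ => p) (fun s => s *: q) b h0 h1).
have pc : {for b, continuous (fun s : R => Phi (p + s *: q))}.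
  exact: (@continuous_comp R V R _ Phi b hc (@Phi_cont (p + b *: q))).
have vc : {for b, continuous (fun s : R => (Phi (p + s *: q))^-1)}.
  by apply: continuousV => //; rewrite gt_eqF // Phi_gt0.
exact: (@continuousZ R V R (fun s => (Phi (p + s *: q))^-1) (fun s => p + s *: q) b vc hc).
Unshelve. all: by end_near.
Qed.

Lemma mixed_false x1 x2 a g : C x1 -> C x2 -> x1 != x2 -> 0 <= a -> 0 < g ->
  a *: x1 = g *: x2 -> False.
Proof.
move=> C1 C2 ne a0 g0 h.
have ag : a = g.
  have := congr1 Phi h; rewrite (Phi_hom _ a0) (Phi_hom _ (ltW g0)).
  by rewrite (PhiC C1) (PhiC C2) !mulr1.
have gn0 : g != 0 by rewrite gt_eqF.
by move: h; rewrite ag => /(scalerI gn0) h; move: ne; rewrite h eqxx.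
Qed.

Lemma indep x1 x2 a b : C x1 -> C x2 -> x1 != x2 -> a *: x1 + b *: x2 = 0 ->
  a = 0 /\ b = 0.
Proof.
move=> C1 C2 ne h.
have [a0|a0] := leP 0 a; have [b0|b0] := leP 0 b.
- have [ab0|ab] := eqVneq (a + b) 0.
    by move/eqP: ab0; rewrite paddr_eq0 // => /andP [/eqP -> /eqP ->].
  have := comb_nz C1 C2 a0 b0; rewrite h eqxx lt_def ab addr_ge0 //.
  by move=> /(_ isT).
- exfalso; apply: (mixed_false C1 C2 ne a0 (_ : 0 < - b)); first by rewrite oppr_gt0.
  by rewrite scaleNr; apply/eqP; rewrite -subr_eq0 opprK h.
- exfalso; have ne' : x2 != x1 by rewrite eq_sym.
  apply: (mixed_false C2 C1 ne' b0 (_ : 0 < - a)); first by rewrite oppr_gt0.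
  by rewrite scaleNr; apply/eqP; rewrite -subr_eq0 opprK addrC h.
- have := comb_nz C1 C2 (_ : 0 <= - a) (_ : 0 <= - b).
  rewrite !scaleNr (_ : - (a *: x1) - b *: x2 = 0) ?eqxx => [H|]; last by rewrite -opprD h oppr0.
  suff : ~~ true by []. apply: H; rewrite ?oppr_ge0 ?ltW //. by apply: addr_gt0; rewrite oppr_gt0.
Qed.

Lemma boundary x1 x2 : C x1 -> C x2 -> x1 != x2 ->
  exists g, 0 <= g /\ K (x1 - g *: x2) /\ forall c, g < c -> ~ K (x1 - c *: x2).
Proof.
move=> C1 C2 ne.
pose G := [set c : R | K (x1 - c *: x2)].
have nz c : x1 - c *: x2 != 0.
  apply/negP => /eqP h; have := @indep x1 x2 1 (- c) C1 C2 ne.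
  rewrite scale1r scaleNr h => /(_ erefl) [/eqP]; by rewrite oner_eq0.
have down c c' : c' <= c -> G c -> G c'.
  move=> cc Gc; rewrite /G /=.
  have -> : x1 - c' *: x2 = (x1 - c *: x2) + (c - c') *: x2.
    by apply/rowP => i; rewrite !mxE; ring.
  by apply: K_add => //; apply: K_scale; [rewrite subr_ge0 | exact: C_K].
have G0 : G 0 by rewrite /G /= scale0r subr0; exact: C_K.
have ub : has_ubound G.
  apply: contrapT => nub.
  have allG c : G c.
    have : ~ ubound G c by move=> h; apply: nub; exists c.
    move=> /existsNP [y /not_implyP [Gy /negP]]; rewrite -ltNge => cy.
    by apply: (down y) => //; exact: ltW.
  have Km : K (- x2 + 0 *: - x1).
    apply: (@Kline_lim _ _ (-1)); first by rewrite ltrN10.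
      move=> s; apply/negP => /eqP h; have := @indep x1 x2 (- s) (-1) C1 C2 ne.
      have -> : - s *: x1 + -1 *: x2 = - x2 + s *: - x1 by apply/rowP => i; rewrite !mxE; ring.
      by move=> /(_ h) [_ /eqP]; rewrite oppr_eq0 oner_eq0.
    move=> s /andP [s1 s0].
    have -> : - x2 + s *: - x1 = (- s) *: (x1 - (- s)^-1 *: x2).
      by apply/rowP => i; rewrite !mxE; field; rewrite lt_eqF.
    by apply: K_scale; [rewrite oppr_ge0 ltW | exact: allG].
  move: Km; rewrite scale0r addr0 => Km.
  have := K_pointed (C_K C2) Km (subrr x2).
  by move/eqP; rewrite (negbTE (C_neq0 C2)).
have hsG : has_sup G by split => //; exists 0.
exists (sup G); split; first exact: sup_upper_bound.
split.
  have -> : x1 - sup G *: x2 = x1 + sup G *: - x2 by rewrite scalerN.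
  apply: (@Kline_lim _ _ (sup G - 1)); first by rewrite ltrBlDr ltrDl ltr01.
    by move=> s; rewrite scalerN; exact: nz.
  move=> s /andP [s1 s2].
  have sp : 0 < sup G - s by rewrite subr_gt0.
  have [e Ge se] := @sup_adherent _ G (sup G - s) sp hsG.
  rewrite scalerN; apply: (down e) => //.
  by move: se; rewrite opprB addrCA subrr addr0 => /ltW.
move=> c gc Gc; have := sup_upper_bound hsG Gc.
by rewrite leNgt gc.
Qed.

Definition P (v : V) := exists s : seq (R * V),
  (forall z, z \in s -> 0 <= z.1 /\ sext Phi C z.2) /\ v = \sum_(z <- s) z.1 *: z.2.

Lemma P0 : P 0.
Proof. by exists [::]; split => //; rewrite big_nil. Qed.

Lemma P_ext t c : sext Phi C c -> 0 <= t -> P (t *: c).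
Proof.
move=> ec t0; exists [:: (t, c)]; split; last by rewrite big_seq1.
by move=> z; rewrite inE => /eqP ->.
Qed.

Lemma P_comb u w a b : P u -> P w -> 0 <= a -> 0 <= b -> P (a *: u + b *: w).
Proof.
move=> [s1 [h1 ->]] [s2 [h2 ->]] a0 b0.
exists ([seq (a * z.1, z.2) | z <- s1] ++ [seq (b * z.1, z.2) | z <- s2]); split.
  move=> z; rewrite mem_cat => /orP [] /mapP [y ys ->] /=.
    by have [y0 ey] := h1 _ ys; rewrite mulr_ge0.
  by have [y0 ey] := h2 _ ys; rewrite mulr_ge0.
rewrite big_cat !big_map !scaler_sumr /=.
by congr (_ + _); apply: eq_bigr => z _; rewrite scalerA.
Qed.

Lemma main_ind k : forall v, K v ->
  (forall s : seq V, free s -> (forall x, x \in s -> L v x) -> (size s <= k)%N) -> P v.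
Proof.
elim: k => [|k IH] v Kv hb.
  have [->|vn0] := eqVneq v 0; first exact: P0.
  have := hb [:: v]; rewrite seq1_free vn0 => /(_ isT) H.
  suff : (1 <= 0)%N by [].
  by apply: H => x; rewrite inE => /eqP ->; exact: L_self.
have [->|vn0] := eqVneq v 0; first exact: P0.
have Cc := K_rho vn0 Kv.
case: (pselect (exists x1 x2 l, C x1 /\ C x2 /\ (0 < l < 1) /\
   rho Phi v = sadd Phi l x1 x2 /\ x1 != x2)); last first.
  move=> nE; rewrite (rho_scale vn0); apply: P_ext => //.
  split => // x1 x2 l C1 C2 l01 ce; apply: contrapT => ne; apply: nE.
  by exists x1, x2, l; do 4!split => //; apply/eqP.
move=> [x1 [x2 [l [C1 [C2 [/andP [l0 l1] [ce ne]]]]]]].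
pose w := l *: x1 + (1 - l) *: x2.
have wnz : w != 0.
  by apply: comb_nz => //; rewrite ?subr_ge0 ?ltW // addrC subrK ltr01.
have rvw : rho Phi v = rho Phi w by rewrite ce.
pose lam := Phi v / Phi w.
have lam0 : 0 < lam by rewrite divr_gt0 // Phi_gt0.
pose a := lam * l; pose b := lam * (1 - l).
have a0 : 0 < a by rewrite mulr_gt0.
have b0 : 0 < b by rewrite mulr_gt0 // subr_gt0.
have vE : v = a *: x1 + b *: x2.
  rewrite {1}(rho_scale vn0) rvw rhoE //.
  by apply/rowP => i; rewrite !mxE /a /b /lam; field; rewrite gt_eqF // Phi_gt0.
have [g [g0 [Ke hge]]] := boundary C1 C2 ne.
have ne' : x2 != x1 by rewrite eq_sym.
have [h [h0 [Ke' hhe]]] := boundary C2 C1 ne'.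
have gh1 : g * h < 1.
  rewrite ltNge; apply/negP => gh.
  have K1 : K ((1 - g * h) *: x1).
    have -> : (1 - g * h) *: x1 = (x1 - g *: x2) + g *: (x2 - h *: x1).
      by apply/rowP => i; rewrite !mxE; ring.
    by apply: K_add => //; apply: K_scale.
  have K2 : K ((g * h - 1) *: x1) by apply: K_scale; [rewrite subr_ge0 | exact: C_K].
  have := K_pointed K1 K2 (_ : _ = 0).
  have -> : (1 - g * h) *: x1 + (g * h - 1) *: x1 = 0.
    by apply/rowP => i; rewrite !mxE; ring.
  move=> /(_ erefl) /eqP; rewrite scaler_eq0 (negbTE (C_neq0 C1)) orbF subr_eq0 => /eqP gh1.
  have := K_pointed Ke (K_scale g0 Ke') (_ : _ = 0).
  have -> : x1 - g *: x2 + g *: (x2 - h *: x1) = 0.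
    have ee (u y : R) : u - g * y + g * (y - h * u) = (1 - g * h) * u by ring.
    by apply/rowP => i; rewrite !mxE ee -gh1 subrr mul0r.
  move=> /(_ erefl) /eqP; apply/negP.
  apply/negP => /eqP h1; have := @indep x1 x2 1 (- g) C1 C2 ne.
  rewrite scale1r scaleNr h1 => /(_ erefl) [/eqP]; by rewrite oner_eq0.
have D0 : 0 < 1 - g * h by rewrite subr_gt0.
pose p := (a + h * b) / (1 - g * h); pose q := (b + g * a) / (1 - g * h).
have p0 : 0 < p by rewrite divr_gt0 // ltr_pwDl // mulr_ge0 // ltW.
have q0 : 0 < q by rewrite divr_gt0 // ltr_pwDl // mulr_ge0 // ltW.
have vE2 : v = p *: (x1 - g *: x2) + q *: (x2 - h *: x1).
  by rewrite vE; apply/rowP => i; rewrite !mxE /p /q; field; rewrite gt_eqF.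
have Lx1 : L v x1.
  exists a => //; split.
    have -> : v + a *: x1 = (2 * a) *: x1 + b *: x2.
      by rewrite vE; apply/rowP => i; rewrite !mxE; ring.
    have a2 : 0 <= 2 * a by apply: mulr_ge0 => //; exact: ltW.
    by apply: K_add; apply: K_scale; rewrite ?a2 ?(ltW b0) //; apply: C_K.
  have -> : v - a *: x1 = b *: x2 by rewrite vE; apply/rowP => i; rewrite !mxE; ring.
  by apply: K_scale; [exact: ltW | apply: C_K].
have Lx2 : L v x2.
  exists b => //; split.
    have -> : v + b *: x2 = a *: x1 + (2 * b) *: x2.
      by rewrite vE; apply/rowP => i; rewrite !mxE; ring.
    have b2 : 0 <= 2 * b by apply: mulr_ge0 => //; exact: ltW.
    by apply: K_add; apply: K_scale; rewrite ?b2 ?(ltW a0) //; apply: C_K.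
  have -> : v - b *: x2 = a *: x1 by rewrite vE; apply/rowP => i; rewrite !mxE; ring.
  by apply: K_scale; [exact: ltW | apply: C_K].
have Le : forall d, L (x1 - g *: x2) d -> L v d.
  rewrite vE2; apply: L_mono => //; apply: K_scale => //; exact: ltW.
have Le' : forall d, L (x2 - h *: x1) d -> L v d.
  rewrite vE2 [p *: _ + _]addrC; apply: L_mono => //; apply: K_scale => //; exact: ltW.
rewrite vE2; apply: P_comb; rewrite ?ltW //; apply: IH => // s fs hs.
- have nin : x2 \notin span s.
    apply/negP => /(L_span Ke hs) [eps eps0 [_ Km]].
    apply: (hge (g + eps)); first by rewrite ltrDl.
    by move: Km; rewrite scalerDl opprD addrA.
  have := hb (x2 :: s); rewrite free_cons nin fs /= ltnS; apply => // x.
  by rewrite inE => /orP [/eqP ->|/hs /Le].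
- have nin : x1 \notin span s.
    apply/negP => /(L_span Ke' hs) [eps eps0 [_ Km]].
    apply: (hhe (h + eps)); first by rewrite ltrDl.
    by move: Km; rewrite scalerDl opprD addrA.
  have := hb (x1 :: s); rewrite free_cons nin fs /= ltnS; apply => // x.
  by rewrite inE => /orP [/eqP ->|/hs /Le'].
Qed.

Lemma Ksum k (w : 'I_k -> R) (p : 'I_k -> V) : (forall i, 0 <= w i) ->
  (forall i, C (p i)) -> K (\sum_(i < k) w i *: p i).
Proof.
move=> w0 Cp; apply: (big_ind K K0 K_add) => i _.
by apply: K_scale => //; exact: C_K.
Qed.

Lemma Ksum_eq0 k (w : 'I_k -> R) (p : 'I_k -> V) : (forall i, 0 <= w i) ->
  (forall i, C (p i)) -> \sum_(i < k) w i *: p i = 0 -> forall i, w i = 0.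
Proof.
move=> w0 Cp h i; move: h; rewrite (bigD1 i) //= => h.
have Kr : K (\sum_(j < k | j != i) w j *: p j).
  by apply: (big_ind K K0 K_add) => j _; apply: K_scale => //; exact: C_K.
have := K_pointed (K_scale (w0 i) (C_K (Cp i))) Kr h.
by move/eqP; rewrite scaler_eq0 (negbTE (C_neq0 (Cp i))) orbF => /eqP.
Qed.

Lemma sext_C x : sext Phi C x -> C x.
Proof. by case. Qed.

Lemma C_rep c : C c -> exists y, Defs.conv (sext Phi C) y /\ rho Phi y = c.
Proof.
move=> Cc.
have [s [hs ce]] : P c.
  apply: (@main_ind n) => //; first exact: C_K.
  by move=> s fs _; exact: free_size.
pose w := fun i : 'I_(size s) => (nth (0, 0) s i).1.
pose p := fun i : 'I_(size s) => (nth (0, 0) s i).2.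
have hi (i : 'I_(size s)) : 0 <= w i /\ sext Phi C (p i).
  by apply: hs; rewrite mem_nth.
have cE : c = \sum_(i < size s) w i *: p i by rewrite ce (big_nth (0, 0)) big_mkord.
have W0 : 0 < \sum_(i < size s) w i.
  rewrite lt_def sumr_ge0 ?andbT; last by move=> i _; case: (hi i).
  apply/negP => /eqP W0.
  have := psumr_eq0P (fun i _ => proj1 (hi i)) W0 => allz.
  move: cE; rewrite big1 => [c0|i _]; last by rewrite allz // scale0r.
  by move: (C_neq0 Cc); rewrite c0 eqxx.
exists ((\sum_(i < size s) w i)^-1 *: c); split; last first.
  by rewrite rhoZ ?invr_gt0 ?rho_C // C_neq0.
exists (size s), (fun i => w i / \sum_(i < size s) w i), p; split.
  by move=> i; apply: divr_ge0; [case: (hi i) | exact: ltW].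
split; first by rewrite -mulr_suml divff // gt_eqF.
split; first by move=> i; case: (hi i).
by rewrite cE scaler_sumr; apply: eq_bigr => i _; rewrite scalerA mulrC.
Qed.

Lemma final : sext Phi C !=set0 /\ hull_addible Phi (sext Phi C) /\
  C = sco Phi (sext Phi C).
Proof.
have noconv0 : ~ Defs.conv (sext Phi C) 0.
  move=> [k [w [p [w0 [w1 [pe y0]]]]]].
  have Cp i : C (p i) by apply: sext_C.
  have := Ksum_eq0 w0 Cp (esym y0) => allz.
  move: w1; rewrite big1 => [|i _]; last exact: allz.
  by move/eqP; rewrite eq_sym oner_eq0.
have ne : sext Phi C !=set0.
  case: C_sconv => -[c Cc] _.
  have [y [[k [w [p [w0 [w1 [pe ye]]]]]] _]] := C_rep Cc.
  case: k w p w0 w1 pe ye => [|k] w p w0 w1 pe ye.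
    by move: w1; rewrite big_ord0 => /eqP; rewrite eq_sym oner_eq0.
  by exists (p ord0).
split => //; split.
  split => //; split => //.
  by move=> x /sext_C; case: C_sconv => _ [+ _]; apply.
apply/seteqP; split.
  by move=> c Cc; have [y [cy ye]] := C_rep Cc; exists y.
move=> x [y [k [w [p [w0 [w1 [pe ->]]]]]] <-].
have Cp i : C (p i) by apply: sext_C.
apply: K_rho; last exact: Ksum.
apply/eqP => y0; apply: noconv0; rewrite -y0.
by exists k, w, p.
Qed.

End S.

Theorem mainTheorem17 (R : realType) (n : nat) (Phi : 'rV[R]_n -> R)
  (hn : (2 <= n)%N)
  (Phi_cont : continuous Phi)
  (Phi_ge0 : forall x, 0 <= Phi x)
  (Phi_hom : forall (t : R) x, 0 <= t -> Phi (t *: x) = t * Phi x)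
  (Phi_eq0 : forall x, Phi x = 0 <-> x = 0)
  (C : set 'rV[R]_n)
  (C_sconv : s_convex Phi C)
  (C_closed : closed C) :
  sext Phi C !=set0 /\ hull_addible Phi (sext Phi C) /\
  C = sco Phi (sext Phi C).
Proof.
exact: (final Phi_cont Phi_ge0 Phi_hom Phi_eq0 C_sconv C_closed).
Qed.
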